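(* For any direct signaling scheme $\pi$, the procedure CheckPersu$(\pi)$ returns True only if $\pi$ is persuasive, and returns False only if $\pi$ is not persuasive.
   Context: Model: state space $[m]$, common prior $\lambda\in\Delta([m])$, user actions $\{0,1\}$, user utility $\rho:[m]\times\{0,1\}\to\mathbb{R}$; $\omega(i)=(\rho(i,1)-\rho(i,0))\lambda(i)$. Standing assumptions: some state has $\omega(i)>0$ and $\sum_i\omega(i)<0$. In each round the platform commits to a signaling scheme, a state $\theta_t\sim\lambda$ and then a signal are drawn, and the user, who forms the Bayesian posterior, takes action 1 iff her posterior expected utility of action 1 is at least that of action 0. A direct signaling scheme has signals $\{0,1\}$ and sends signal 1 in state $i$ with probability $\pi(i)$; it is persuasive if the user takes action 1 whenever signal 1 is realized. Procedure CheckPersu$(\pi)$: in each successive round commit to $\pi$ and observe the realized signal $\sigma_t$ and action $a_t$; if $\sigma_t=1,a_t=1$ return True; if $\sigma_t=1,a_t=0$ return False; if $\sigma_t=0,a_t=1$ return False; otherwise go to the next round; if no rounds remain return round-exhausted. *)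

(* Defs.v *)
From mathcomp Require Import all_boot all_order all_algebra.
Set Implicit Arguments. Unset Strict Implicit. Unset Printing Implicit Defensive.
Import Order.TTheory GRing.Theory Num.Theory.
Local Open Scope ring_scope.

Section Model.
Variables (R : realFieldType) (m : nat).
(* prior lambda, user utility rho (action 1 = true, action 0 = false),
   direct signaling scheme pi : probability of sending signal 1 in state i *)
Variables (lambda : 'I_m -> R) (rho : 'I_m -> bool -> R) (pi : 'I_m -> R).

Definition omega (i : 'I_m) : R := (rho i true - rho i false) * lambda i.

Definition sigProb (s : bool) (i : 'I_m) : R := if s then pi i else 1 - pi i.

Definition signalProb (s : bool) : R := \sum_(j < m) lambda j * sigProb s j.

Definition posterior (s : bool) (i : 'I_m) : R :=
  lambda i * sigProb s i / signalProb s.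

Definition userAction (s : bool) : bool :=
  (\sum_(i < m) posterior s i * rho i false)
    <= (\sum_(i < m) posterior s i * rho i true).

Definition persuasive : Prop := 0 < signalProb true -> userAction true.

Definition realizable (o : 'I_m * bool) : Prop :=
  0 < lambda o.1 /\ 0 < sigProb o.2 o.1.

Inductive outcome := OTrue | OFalse | ORoundExhausted.

(* CheckPersu(pi) run on the sequence of realized (state, signal) pairs of
   the remaining rounds; the action a_t is the user's best response. *)
Fixpoint checkPersu (obs : seq ('I_m * bool)) : outcome :=
  match obs with
  | [::] => ORoundExhausted
  | o :: rest =>
      let s := o.2 in
      let a := userAction s in
      if s && a then OTrue
      else if s && ~~ a then OFalse
      else if ~~ s && a then OFalse
      else checkPersu rest
  end.
End Model.

(* Main.v *)
Require Import Defs.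
From mathcomp Require Import all_boot all_order all_algebra.
From mathcomp Require Import ring lra.
Import Order.TTheory GRing.Theory Num.Theory.
Local Open Scope ring_scope.

Lemma uA (R : realFieldType) (m : nat)
    (lambda : 'I_m -> R) (rho : 'I_m -> bool -> R) (pi : 'I_m -> R) s :
  0 < signalProb lambda pi s ->
  userAction lambda rho pi s = (0 <= \sum_i omega lambda rho i * sigProb pi s i).
Proof.
move=> hp; rewrite /userAction -subr_ge0 -sumrB.
have -> : \sum_i (posterior lambda pi s i * rho i true - posterior lambda pi s i * rho i false)
   = (\sum_i omega lambda rho i * sigProb pi s i) * (signalProb lambda pi s)^-1.
  rewrite mulr_suml; apply: eq_bigr => i _; rewrite /posterior /omega; ring.
by rewrite pmulr_lge0 // invr_gt0.
Qed.

Lemma sp_pos (R : realFieldType) (m : nat)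
    (lambda : 'I_m -> R) (pi : 'I_m -> R) s (i : 'I_m) :
  (forall i, 0 <= lambda i) -> (forall i, 0 <= pi i <= 1) ->
  0 < lambda i -> 0 < sigProb pi s i -> 0 < signalProb lambda pi s.
Proof.
move=> hl hpi li si; rewrite /signalProb (bigD1 i) //=.
apply: ltr_pwDl; first exact: mulr_gt0.
apply: sumr_ge0 => j _; apply: mulr_ge0 => //.
case: s {si} => /=; have := hpi j; case/andP => a b //; by rewrite subr_ge0.
Qed.

Theorem mainTheorem4 (R : realFieldType) (m : nat)
    (lambda : 'I_m -> R) (rho : 'I_m -> bool -> R) (pi : 'I_m -> R) :
  (forall i, 0 <= lambda i) -> \sum_(i < m) lambda i = 1 ->
  (exists i, 0 < omega lambda rho i) ->
  \sum_(i < m) omega lambda rho i < 0 ->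
  (forall i, 0 <= pi i <= 1) ->
  forall obs : seq ('I_m * bool),
    (forall o, o \in obs -> realizable lambda pi o) ->
    (checkPersu lambda rho pi obs = OTrue -> persuasive lambda rho pi) /\
    (checkPersu lambda rho pi obs = OFalse -> ~ persuasive lambda rho pi).
Proof.
move=> hl _ _ hsum hpi; elim=> [|[i s] rest IH] hobs //=.
have [li si] := hobs (i, s) (mem_head _ _); rewrite /= in li si.
have IH' := IH (fun o ho => hobs o (mem_behead (s:=(i,s)::rest) ho)).
clear IH hobs; case: s si => si /=.
  case hu: (userAction lambda rho pi true) => /=.
    by split=> // _ _.
  split=> // _ hp; move: (hp (@sp_pos _ _ lambda pi _ i hl hpi li si)); by rewrite hu.
case hu: (userAction lambda rho pi false) => /=; last exact: IH'.
split=> // _ hp.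
have spf := @sp_pos _ _ lambda pi _ i hl hpi li si.
move: hu; rewrite uA // => hf.
have hsplit : \sum_i omega lambda rho i * sigProb pi true i
   = \sum_i omega lambda rho i - \sum_i omega lambda rho i * sigProb pi false i.
  rewrite -sumrB; apply: eq_bigr => j _; rewrite /sigProb; ring.
have hneg : \sum_i omega lambda rho i * sigProb pi true i < 0.
  rewrite hsplit; lra.
have spt : 0 < signalProb lambda pi true.
  rewrite lt_def; apply/andP; split; last first.
    apply: sumr_ge0 => j _; apply: mulr_ge0 => //; by case/andP: (hpi j).
  apply/negP => /eqP h0.
  have hz : forall j, lambda j * sigProb pi true j = 0.
    move=> j; apply: (psumr_eq0P _ h0) => // k _.
    by apply: mulr_ge0 => //; case/andP: (hpi k).
  suff : \sum_i omega lambda rho i * sigProb pi true i = 0 by lra.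
  apply: big1 => j _; rewrite /omega -mulrA hz; ring.
move: (hp spt); rewrite uA // => h; lra.
Qed.
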